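(* Let $\Phi:\mathbb{R}^2\to\mathbb{R}^2$, $\Phi(u,v)=(\varphi(u,v),\psi(u,v))$, where $\varphi$ and $\psi$ are harmonic functions on $\mathbb{R}^2$. Then $\inf_{\mathbb{R}^2}|J_\Phi|=0$, where $J_\Phi=\varphi_u\psi_v-\varphi_v\psi_u$, unless $\Phi$ is an affine map. *)

(* Defs.v *)
From Stdlib Require Import Reals.
From Coquelicot Require Import Coquelicot.
Open Scope R_scope.

Definition du (f : R -> R -> R) : R -> R -> R :=
  fun u v => Derive (fun x => f x v) u.
Definition dv (f : R -> R -> R) : R -> R -> R :=
  fun u v => Derive (fun y => f u y) v.

Definition has_partials (f : R -> R -> R) : Prop :=
  forall u v, ex_derive (fun x => f x v) u /\ ex_derive (fun y => f u y) v.

Definition C2 (f : R -> R -> R) : Prop :=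
  has_partials f /\ has_partials (du f) /\ has_partials (dv f) /\
  forall u v,
    continuity_2d_pt f u v /\
    continuity_2d_pt (du f) u v /\ continuity_2d_pt (dv f) u v /\
    continuity_2d_pt (du (du f)) u v /\ continuity_2d_pt (dv (du f)) u v /\
    continuity_2d_pt (du (dv f)) u v /\ continuity_2d_pt (dv (dv f)) u v.

Definition harmonic (f : R -> R -> R) : Prop :=
  C2 f /\ forall u v, du (du f) u v + dv (dv f) u v = 0.

Definition jac (phi psi : R -> R -> R) (u v : R) : R :=
  du phi u v * dv psi u v - dv phi u v * du psi u v.

Definition affine_map (phi psi : R -> R -> R) : Prop :=
  exists a b c d e g : R, forall u v,
    phi u v = a * u + b * v + c /\ psi u v = d * u + e * v + g.

(* Main.v *)
Require Import Defs.
From Stdlib Require Import Reals Lra.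
From Coquelicot Require Import Coquelicot.
Open Scope R_scope.

Lemma isd_plus f g x a b : is_derive f x a -> is_derive g x b -> is_derive (fun t => f t + g t) x (a + b).
Proof. intros; apply (is_derive_plus f g); auto. Qed.
Lemma isd_minus f g x a b : is_derive f x a -> is_derive g x b -> is_derive (fun t => f t - g t) x (a - b).
Proof. intros; apply (is_derive_minus f g); auto. Qed.
Lemma isd_opp f x a : is_derive f x a -> is_derive (fun t => - f t) x (- a).
Proof. intros; apply (is_derive_opp f); auto. Qed.
Lemma isd_mult f g x a b : is_derive f x a -> is_derive g x b -> is_derive (fun t => f t * g t) x (a * g x + f x * b).
Proof. intros; apply (is_derive_mult f g); auto. intros; apply Rmult_comm. Qed.
Lemma isd_const (c x : R) : is_derive (fun _ : R => c) x 0.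
Proof. apply (is_derive_const (V:=R_NormedModule) c x). Qed.
Lemma isd_id (x : R) : is_derive (fun t : R => t) x 1.
Proof. apply (is_derive_id (K:=R_AbsRing) x). Qed.
Lemma isd_eq (f : R -> R) (x a b : R) : is_derive f x a -> a = b -> is_derive f x b.
Proof. intros H ->; auto. Qed.
Lemma isd_cos x : is_derive cos x (- sin x).
Proof. apply is_derive_Reals, derivable_pt_lim_cos. Qed.
Lemma isd_sin x : is_derive sin x (cos x).
Proof. apply is_derive_Reals, derivable_pt_lim_sin. Qed.

Lemma c2_comp f g h x y : continuity_2d_pt f (g x y) (h x y) -> continuity_2d_pt g x y ->
  continuity_2d_pt h x y -> continuity_2d_pt (fun u v => f (g u v) (h u v)) x y.
Proof.
  intros Hf Hg Hh eps.
  destruct (Hf eps) as [d1 H1].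
  destruct (Hg d1) as [d2 H2]. destruct (Hh d1) as [d3 H3].
  assert (Hd : 0 < Rmin d2 d3) by (apply Rmin_pos; apply cond_pos).
  exists (mkposreal _ Hd); simpl; intros u v Hu Hv.
  apply H1.
  - apply H2; eapply Rlt_le_trans; eauto; [apply Rmin_l|apply Rmin_l].
  - apply H3; eapply Rlt_le_trans; eauto; [apply Rmin_r|apply Rmin_r].
Qed.

Lemma c2_to1 f x y : continuity_2d_pt f x y -> continuous (fun t => f x t) y.
Proof.
  intros Hf. apply continuity_pt_filterlim.
  unfold continuity_pt, continue_in, limit1_in, limit_in. intros eps Heps.
  destruct (Hf (mkposreal _ Heps)) as [d H].
  exists d; split; [apply cond_pos|]. intros t [_ Ht]. simpl in *. unfold R_dist in *.
  apply H. rewrite Rminus_eq_0, Rabs_R0; apply cond_pos. exact Ht.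
Qed.

Lemma c2_cos1 : forall x y, continuity_2d_pt (fun _ v => cos v) x y.
Proof. intros; apply (continuity_1d_2d_pt_comp cos (fun _ v => v)). apply continuity_cos. apply continuity_2d_pt_id2. Qed.
Lemma c2_sin1 : forall x y, continuity_2d_pt (fun _ v => sin v) x y.
Proof. intros; apply (continuity_1d_2d_pt_comp sin (fun _ v => v)). apply continuity_sin. apply continuity_2d_pt_id2. Qed.

Lemma diff_C1 (f fu fv : R -> R -> R) x y :
  (forall u v, is_derive (fun s => f s v) u (fu u v) /\ is_derive (fun s => f u s) v (fv u v)) ->
  continuity_2d_pt fu x y -> continuity_2d_pt fv x y ->
  differentiable_pt_lim f x y (fu x y) (fv x y).
Proof.
  intros Hd Hu Hv eps.
  assert (He2 : 0 < eps / 2) by (destruct eps; simpl; lra).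
  destruct (Hu (mkposreal _ He2)) as [d1 H1].
  destruct (Hv (mkposreal _ He2)) as [d2 H2].
  assert (Hd0 : 0 < Rmin d1 d2) by (apply Rmin_pos; apply cond_pos).
  exists (mkposreal _ Hd0); simpl; intros u v Hu' Hv'.
  assert (Hu1 : Rabs (u - x) < d1) by (apply Rlt_le_trans with (Rmin d1 d2); [exact Hu'|apply Rmin_l]).
  assert (Hv1 : Rabs (v - y) < d1) by (apply Rlt_le_trans with (Rmin d1 d2); [exact Hv'|apply Rmin_l]).
  assert (Hu2 : Rabs (u - x) < d2) by (apply Rlt_le_trans with (Rmin d1 d2); [exact Hu'|apply Rmin_r]).
  assert (Hv2 : Rabs (v - y) < d2) by (apply Rlt_le_trans with (Rmin d1 d2); [exact Hv'|apply Rmin_r]).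
  destruct (MVT_gen (fun s => f s v) x u (fun s => fu s v)) as [c [Hc Ec]].
  { intros z _; exact (proj1 (Hd z v)). }
  { intros z _; apply continuity_pt_filterlim. apply (ex_derive_continuous (fun s => f s v)).
    eexists; exact (proj1 (Hd z v)). }
  destruct (MVT_gen (fun s => f x s) y v (fun s => fv x s)) as [c' [Hc' Ec']].
  { intros z _; exact (proj2 (Hd x z)). }
  { intros z _; apply continuity_pt_filterlim. apply (ex_derive_continuous (fun s => f x s)).
    eexists; exact (proj2 (Hd x z)). }
  simpl in Ec, Ec'.
  assert (A1 : Rabs (fu c v - fu x y) < eps / 2).
  { apply H1; auto.
    apply Rle_lt_trans with (Rabs (u - x)); auto.
    destruct (Rle_dec x u).
    - rewrite Rmin_left, Rmax_right in Hc by lra. rewrite !Rabs_pos_eq; lra.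
    - rewrite Rmin_right, Rmax_left in Hc by lra. rewrite !Rabs_left1; lra. }
  assert (A2 : Rabs (fv x c' - fv x y) < eps / 2).
  { apply H2; [rewrite Rminus_eq_0, Rabs_R0; apply cond_pos|].
    apply Rle_lt_trans with (Rabs (v - y)); auto.
    destruct (Rle_dec y v).
    - rewrite Rmin_left, Rmax_right in Hc' by lra. rewrite !Rabs_pos_eq; lra.
    - rewrite Rmin_right, Rmax_left in Hc' by lra. rewrite !Rabs_left1; lra. }
  replace (f u v - f x y - (fu x y * (u - x) + fv x y * (v - y)))
    with ((fu c v - fu x y) * (u - x) + (fv x c' - fv x y) * (v - y)) by lra.
  eapply Rle_trans; [apply Rabs_triang|]. rewrite !Rabs_mult.
  assert (M1 : Rabs (u - x) <= Rmax (Rabs (u - x)) (Rabs (v - y))) by apply Rmax_l.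
  assert (M2 : Rabs (v - y) <= Rmax (Rabs (u - x)) (Rabs (v - y))) by apply Rmax_r.
  pose proof (Rabs_pos (u - x)); pose proof (Rabs_pos (v - y)).
  apply Rle_trans with (eps/2 * Rabs (u - x) + eps/2 * Rabs (v-y)).
  - apply Rplus_le_compat; apply Rmult_le_compat_r; lra.
  - nra.
Qed.

Lemma ode_pos (A dA : R -> R) K :
  (forall r, is_derive A r (dA r)) -> (forall r, A r = r * dA r) ->
  (forall r, Rabs (A r) <= K) -> forall r, 0 < r -> A r = 0.
Proof.
  intros HD HE HB r0 Hr0.
  assert (key : forall R, r0 <= R -> A R / R = A r0 / r0).
  { intros R HR. destruct (Req_dec R r0) as [->|Hne]; [reflexivity|].
    destruct (MVT_gen (fun s => A s / s) r0 R (fun _ => 0)) as [c [_ Ec]].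
    - intros x Hx. rewrite Rmin_left, Rmax_right in Hx by lra.
      eapply isd_eq. apply is_derive_div. apply HD. apply isd_id. lra.
      rewrite (HE x). field. lra.
    - intros x Hx. rewrite Rmin_left, Rmax_right in Hx by lra.
      apply continuity_pt_filterlim. apply (ex_derive_continuous (fun s => A s / s)).
      eexists. apply is_derive_div. apply HD. apply isd_id. lra.
    - simpl in Ec. lra. }
  destruct (Req_dec (A r0) 0) as [|Hne]; auto. exfalso.
  pose proof (HB r0) as HB0. pose proof (Rabs_pos (A r0)).
  assert (Hpos : 0 < Rabs (A r0)) by (apply Rabs_pos_lt; auto).
  set (R := r0 * (1 + (Rabs K + 1) / Rabs (A r0))).
  assert (HR : r0 <= R).
  { unfold R. assert (0 <= (Rabs K + 1) / Rabs (A r0)).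
    { unfold Rdiv; apply Rmult_le_pos; [pose proof (Rabs_pos K); lra|left; apply Rinv_0_lt_compat; auto]. }
    nra. }
  pose proof (key R HR) as E.
  assert (E2 : A R = R * (A r0 / r0)).
  { rewrite <- E. field. lra. }
  pose proof (HB R) as HBR. rewrite E2, Rabs_mult, Rabs_pos_eq in HBR by lra.
  unfold Rdiv in HBR. rewrite Rabs_mult, Rabs_inv, (Rabs_pos_eq r0) in HBR by lra.
  unfold R in HBR.
  assert (E3 : r0 * (1 + (Rabs K + 1) / Rabs (A r0)) * (Rabs (A r0) * / r0)
     = Rabs (A r0) + Rabs K + 1) by (field; lra).
  rewrite E3 in HBR. pose proof (Rle_abs K). lra.
Qed.

Lemma ode_zero (A dA : R -> R) K :
  (forall r, is_derive A r (dA r)) -> (forall r, A r = r * dA r) ->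
  (forall r, Rabs (A r) <= K) -> dA 0 = 0.
Proof.
  intros HD HE HB.
  assert (Hp := ode_pos A dA K HD HE HB).
  assert (Hn : forall r, r < 0 -> A r = 0).
  { intros r Hr.
    assert (H := ode_pos (fun s => A (- s)) (fun s => - dA (- s)) K).
    replace r with (- - r) by ring. apply H; try lra.
    - intros s. eapply isd_eq. apply (is_derive_comp A (fun s => - s)). apply HD.
      apply isd_opp, isd_id. simpl. unfold scal; simpl; unfold mult; simpl. ring.
    - intros s. rewrite HE. ring.
    - intros s; apply HB. }
  assert (Z : forall r, A r = 0).
  { intros r. destruct (Rtotal_order r 0) as [H|[H|H]]; auto.
    rewrite HE, H; ring. }
  assert (D := HD 0). apply is_derive_unique in D.
  rewrite <- D. rewrite (Derive_ext A (fun _ => 0)) by auto. apply Derive_const.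
Qed.

Definition C1 (f fu fv : R -> R -> R) : Prop :=
  forall u v, is_derive (fun s => f s v) u (fu u v) /\ is_derive (fun s => f u s) v (fv u v) /\
    continuity_2d_pt fu u v /\ continuity_2d_pt fv u v.

Lemma C1_cont f fu fv : C1 f fu fv -> forall u v, continuity_2d_pt f u v.
Proof.
  intros H u v. apply differentiable_continuity_pt. exists (fu u v), (fv u v).
  apply diff_C1; try apply H. intros; split; apply H.
Qed.

Lemma chain f fu fv g h x dg dh : C1 f fu fv ->
  is_derive g x dg -> is_derive h x dh ->
  is_derive (fun t => f (g t) (h t)) x (fu (g x) (h x) * dg + fv (g x) (h x) * dh).
Proof.
  intros H Hg Hh. apply is_derive_Reals. apply derivable_pt_lim_comp_2d.
  - apply diff_C1; try apply H. intros; split; apply H.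
  - apply is_derive_Reals; auto.
  - apply is_derive_Reals; auto.
Qed.

Definition C1cr (P Q Pu Pv : R -> R -> R) : Prop :=
  C1 P Pu Pv /\ C1 Q (fun u v => - Pv u v) Pu.

Section Liou.
Variables (P Q Pu Pv : R -> R -> R) (x0 y0 M : R).
Hypothesis HC : C1cr P Q Pu Pv.
Hypothesis HB : forall u v, Rabs (P u v) <= M /\ Rabs (Q u v) <= M.

Let X r t := x0 + r * cos t.
Let Y r t := y0 + r * sin t.
Let F r t := P (X r t) (Y r t) * cos t + Q (X r t) (Y r t) * sin t.
Let H r t := P (X r t) (Y r t) * sin t - Q (X r t) (Y r t) * cos t.
Let G r t := Pu (X r t) (Y r t).

Lemma dXr r t : is_derive (fun r => X r t) r (cos t).
Proof. unfold X. eapply isd_eq. apply isd_plus. apply isd_const. apply isd_mult. apply isd_id. apply isd_const. cbv beta. ring. Qed.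
Lemma dYr r t : is_derive (fun r => Y r t) r (sin t).
Proof. unfold Y. eapply isd_eq. apply isd_plus. apply isd_const. apply isd_mult. apply isd_id. apply isd_const. cbv beta; ring. Qed.
Lemma dXt r t : is_derive (fun t => X r t) t (- r * sin t).
Proof. unfold X. eapply isd_eq. apply isd_plus. apply isd_const. apply isd_mult. apply isd_const. apply isd_cos. cbv beta; ring. Qed.
Lemma dYt r t : is_derive (fun t => Y r t) t (r * cos t).
Proof. unfold Y. eapply isd_eq. apply isd_plus. apply isd_const. apply isd_mult. apply isd_const. apply isd_sin. cbv beta; ring. Qed.

Lemma dFr r t : is_derive (fun r => F r t) r (G r t).
Proof.
  unfold F, G. eapply isd_eq. apply isd_plus; apply isd_mult.
  apply (chain P Pu Pv (fun r => X r t) (fun r => Y r t)); [apply HC|apply dXr|apply dYr].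
  apply isd_const.
  apply (chain Q (fun u v => - Pv u v) Pu (fun r => X r t) (fun r => Y r t)); [apply HC|apply dXr|apply dYr].
  apply isd_const.
  cbv beta. transitivity (Pu (X r t) (Y r t) * (Rsqr (sin t) + Rsqr (cos t))); [unfold Rsqr; ring | rewrite sin2_cos2; ring].
Qed.

Lemma dHt r t : is_derive (fun t => H r t) t (F r t - r * G r t).
Proof.
  unfold H, F, G. eapply isd_eq. apply isd_minus; apply isd_mult.
  apply (chain P Pu Pv (fun t => X r t) (fun t => Y r t)); [apply HC|apply dXt|apply dYt].
  apply isd_sin.
  apply (chain Q (fun u v => - Pv u v) Pu (fun t => X r t) (fun t => Y r t)); [apply HC|apply dXt|apply dYt].
  apply isd_cos.
  cbv beta. transitivity (P (X r t) (Y r t) * cos t + Q (X r t) (Y r t) * sin t - r * Pu (X r t) (Y r t) * (Rsqr (sin t) + Rsqr (cos t))); [unfold Rsqr; ring | rewrite sin2_cos2; ring].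
Qed.

Lemma cX r t : continuity_2d_pt X r t.
Proof. unfold X. apply continuity_2d_pt_plus. apply continuity_2d_pt_const.
  apply continuity_2d_pt_mult. apply continuity_2d_pt_id1. apply c2_cos1. Qed.
Lemma cY r t : continuity_2d_pt Y r t.
Proof. unfold Y. apply continuity_2d_pt_plus. apply continuity_2d_pt_const.
  apply continuity_2d_pt_mult. apply continuity_2d_pt_id1. apply c2_sin1. Qed.

Lemma cG r t : continuity_2d_pt G r t.
Proof. unfold G. apply (c2_comp Pu X Y). apply HC. apply cX. apply cY. Qed.

Lemma cF r t : continuity_2d_pt F r t.
Proof.
  unfold F. apply continuity_2d_pt_plus; apply continuity_2d_pt_mult.
  apply (c2_comp P X Y). apply (C1_cont P Pu Pv), HC. apply cX. apply cY. apply c2_cos1.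
  apply (c2_comp Q X Y). apply (C1_cont Q (fun u v => - Pv u v) Pu), HC. apply cX. apply cY. apply c2_sin1.
Qed.

Let A r := RInt (fun t => F r t) 0 (2 * PI).
Let dA r := RInt (fun t => G r t) 0 (2 * PI).

Lemma exF r : ex_RInt (fun t => F r t) 0 (2 * PI).
Proof. apply (@ex_RInt_continuous R_CompleteNormedModule). intros; apply c2_to1, cF. Qed.
Lemma exG r : ex_RInt (fun t => G r t) 0 (2 * PI).
Proof. apply (@ex_RInt_continuous R_CompleteNormedModule). intros; apply c2_to1, cG. Qed.

Lemma dA_ok r : is_derive A r (dA r).
Proof.
  unfold A, dA.
  assert (E : RInt (fun t => G r t) 0 (2 * PI) = RInt (fun t => Derive (fun u => F u t) r) 0 (2 * PI)).
  { apply RInt_ext. intros. symmetry. apply is_derive_unique, dFr. }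
  rewrite E. apply (is_derive_RInt_param F).
  - apply filter_forall. intros. eexists. apply dFr.
  - intros. apply continuity_2d_pt_ext with G. intros; symmetry; apply is_derive_unique, dFr.
    apply cG.
  - apply filter_forall. intros; apply exF.
Qed.

Lemma A_eq r : A r = r * dA r.
Proof.
  assert (I1 : is_RInt (fun t => F r t - r * G r t) 0 (2 * PI) (minus (H r (2 * PI)) (H r 0))).
  { apply (is_RInt_derive (fun t => H r t)).
    - intros; apply dHt.
    - intros. apply (c2_to1 (fun r t => F r t - r * G r t)).
      apply continuity_2d_pt_minus. apply cF. apply continuity_2d_pt_mult.
      apply continuity_2d_pt_id1. apply cG. }
  assert (EH : H r (2 * PI) = H r 0).
  { unfold H, X, Y. rewrite cos_2PI, sin_2PI, cos_0, sin_0. reflexivity. }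
  rewrite EH, minus_eq_zero in I1.
  assert (I2 : is_RInt (fun t => F r t - r * G r t) 0 (2 * PI) (A r - r * dA r)).
  { apply (is_RInt_minus (fun t => F r t) (fun t => r * G r t)).
    apply (RInt_correct (V := R_CompleteNormedModule)), exF.
    apply (is_RInt_scal (fun t => G r t)). apply (RInt_correct (V := R_CompleteNormedModule)), exG. }
  apply (is_RInt_unique (V:=R_CompleteNormedModule)) in I1. apply (is_RInt_unique (V:=R_CompleteNormedModule)) in I2.
  rewrite I1 in I2. change (0 = A r - r * dA r) in I2. lra.
Qed.

Lemma A_bound r : Rabs (A r) <= 2 * PI * (2 * M).
Proof.
  pose proof PI_RGT_0.
  replace (2 * PI * (2 * M)) with ((2 * PI - 0) * (2 * M)) by ring.
  apply abs_RInt_le_const. lra. apply exF.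
  intros t _. unfold F.
  destruct (HB (X r t) (Y r t)) as [B1 B2].
  assert (C1' : Rabs (cos t) <= 1) by (apply Rabs_le; apply COS_bound).
  assert (S1' : Rabs (sin t) <= 1) by (apply Rabs_le; apply SIN_bound).
  eapply Rle_trans; [apply Rabs_triang|]. rewrite !Rabs_mult.
  pose proof (Rabs_pos (cos t)); pose proof (Rabs_pos (sin t)).
  pose proof (Rabs_pos (P (X r t) (Y r t))); pose proof (Rabs_pos (Q (X r t) (Y r t))).
  nra.
Qed.

Lemma liou_main : Pu x0 y0 = 0.
Proof.
  assert (Z := ode_zero A dA (2 * PI * (2 * M)) dA_ok A_eq A_bound).
  unfold dA, G, X, Y in Z.
  rewrite (RInt_ext _ (fun _ => Pu x0 y0)) in Z.
  2:{ intros. rewrite !Rmult_0_l, !Rplus_0_r. reflexivity. }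
  rewrite RInt_const in Z. simpl in Z. unfold scal in Z; simpl in Z; unfold mult in Z; simpl in Z.
  pose proof PI_RGT_0. nra.
Qed.

End Liou.

Lemma liouville_d P Q Pu Pv M : C1cr P Q Pu Pv ->
  (forall u v, Rabs (P u v) <= M /\ Rabs (Q u v) <= M) ->
  forall u v, Pu u v = 0 /\ Pv u v = 0.
Proof.
  intros HC HB u v. split.
  - apply (liou_main P Q Pu Pv u v M HC HB).
  - assert (HC' : C1cr Q (fun u v => - P u v) (fun u v => - Pv u v) Pu).
    { destruct HC as [H1 H2]. split.
      * exact H2.
      * intros a b. destruct (H1 a b) as [D1 [D2 [C1' C2']]].
        split; [|split; [|split]].
        + apply isd_opp; auto.
        + apply isd_opp; auto.
        + apply continuity_2d_pt_opp; auto.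
        + apply continuity_2d_pt_opp; auto. }
    assert (HB' : forall u v, Rabs (Q u v) <= M /\ Rabs (- P u v) <= M).
    { intros a b. rewrite Rabs_Ropp. destruct (HB a b); split; auto. }
    pose proof (liou_main Q (fun u v => - P u v) (fun u v => - Pv u v) Pu u v M HC' HB'). lra.
Qed.

Lemma const1d (g : R -> R) : (forall x, is_derive g x 0) -> forall x, g x = g 0.
Proof.
  intros H x. destruct (MVT_gen g 0 x (fun _ => 0)) as [c [_ E]].
  - intros; apply H.
  - intros; apply continuity_pt_filterlim, (ex_derive_continuous g). eexists; apply H.
  - simpl in E. lra.
Qed.

Lemma const2d f fu fv : C1 f fu fv -> (forall u v, fu u v = 0 /\ fv u v = 0) ->
  forall u v, f u v = f 0 0.
Proof.
  intros HC HZ u v.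
  rewrite (const1d (fun s => f s v)).
  - apply (const1d (fun s => f 0 s)). intros y. destruct (HC 0 y) as [_ [D _]].
    destruct (HZ 0 y) as [_ Z]. rewrite Z in D. exact D.
  - intros x. destruct (HC x v) as [D _]. destruct (HZ x v) as [Z _]. rewrite Z in D. exact D.
Qed.

Lemma comb P1 Q1 Pu1 Pv1 P2 Q2 Pu2 Pv2 s :
  C1cr P1 Q1 Pu1 Pv1 -> C1cr P2 Q2 Pu2 Pv2 ->
  C1cr (fun u v => P1 u v + s * Q2 u v) (fun u v => Q1 u v - s * P2 u v)
       (fun u v => Pu1 u v - s * Pv2 u v) (fun u v => Pv1 u v + s * Pu2 u v).
Proof.
  intros [A1 B1] [A2 B2]. split; intros u v.
  - destruct (A1 u v) as [a1 [a2 [a3 a4]]]. destruct (B2 u v) as [b1 [b2 [b3 b4]]].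
    destruct (A2 u v) as [c1 [c2 [c3 c4]]].
    split; [|split; [|split]].
    + eapply isd_eq. apply isd_plus. exact a1. apply isd_mult. apply isd_const. exact b1. cbv beta; ring.
    + eapply isd_eq. apply isd_plus. exact a2. apply isd_mult. apply isd_const. exact b2. cbv beta; ring.
    + apply continuity_2d_pt_minus; auto. apply continuity_2d_pt_mult; auto. apply continuity_2d_pt_const.
    + apply continuity_2d_pt_plus; auto. apply continuity_2d_pt_mult; auto. apply continuity_2d_pt_const.
  - destruct (B1 u v) as [a1 [a2 [a3 a4]]]. destruct (A2 u v) as [b1 [b2 [b3 b4]]].
    split; [|split; [|split]].
    + eapply isd_eq. apply isd_minus. exact a1. apply isd_mult. apply isd_const. exact b1. cbv beta; ring.
    + eapply isd_eq. apply isd_minus. exact a2. apply isd_mult. apply isd_const. exact b2. cbv beta; ring.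
    + apply continuity_2d_pt_opp, continuity_2d_pt_plus; auto. destruct (A1 u v) as [_ [_ [_ ?]]]; auto.
      apply continuity_2d_pt_mult; auto. apply continuity_2d_pt_const.
    + apply continuity_2d_pt_minus; auto. apply continuity_2d_pt_mult; auto. apply continuity_2d_pt_const.
Qed.

Ltac cont2 := repeat (first [apply continuity_2d_pt_plus | apply continuity_2d_pt_minus
  | apply continuity_2d_pt_mult | apply continuity_2d_pt_opp | apply continuity_2d_pt_const
  | apply continuity_2d_pt_inv | assumption]).

Section Inv.
Variables (P Q Pu Pv : R -> R -> R).
Hypothesis HC : C1cr P Q Pu Pv.
Hypothesis HN : forall u v, 0 < P u v * P u v + Q u v * Q u v.

Definition Nf u v := P u v * P u v + Q u v * Q u v.
Definition Nuf u v := 2 * P u v * Pu u v - 2 * Q u v * Pv u v.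
Definition Nvf u v := 2 * P u v * Pv u v + 2 * Q u v * Pu u v.
Definition Xuf u v := (Pu u v * Nf u v - P u v * Nuf u v) / (Nf u v * Nf u v).
Definition Xvf u v := (Pv u v * Nf u v - P u v * Nvf u v) / (Nf u v * Nf u v).

Lemma inv_C1cr : C1cr (fun u v => P u v / Nf u v) (fun u v => - Q u v / Nf u v) Xuf Xvf.
Proof.
  destruct HC as [A B].
  assert (cP := C1_cont _ _ _ A). assert (cQ := C1_cont _ _ _ B).
  split; intros u v.
  - destruct (A u v) as [a1 [a2 [a3 a4]]]. destruct (B u v) as [b1 [b2 [b3 b4]]].
    assert (Hn := HN u v). fold (Nf u v) in Hn.
    assert (cu : continuity_2d_pt Xuf u v).
    { unfold Xuf, Nf, Nuf. unfold Rdiv. cont2; auto. unfold Nf in Hn; nra. }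
    assert (cv : continuity_2d_pt Xvf u v).
    { unfold Xvf, Nf, Nvf. unfold Rdiv. cont2; auto. unfold Nf in Hn; nra. }
    split; [|split; [|split]]; auto.
    + unfold Nf. eapply isd_eq. apply is_derive_div. exact a1.
      apply isd_plus; apply isd_mult; eauto. unfold Nf in Hn; lra.
      unfold Xuf, Nuf, Nf. cbv beta; field. unfold Nf in Hn; lra.
    + unfold Nf. eapply isd_eq. apply is_derive_div. exact a2.
      apply isd_plus; apply isd_mult; eauto. unfold Nf in Hn; lra.
      unfold Xvf, Nvf, Nf. cbv beta; field. unfold Nf in Hn; lra.
  - destruct (A u v) as [a1 [a2 [a3 a4]]]. destruct (B u v) as [b1 [b2 [b3 b4]]].
    assert (Hn := HN u v). fold (Nf u v) in Hn.
    assert (cu : continuity_2d_pt Xuf u v).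
    { unfold Xuf, Nf, Nuf. unfold Rdiv. cont2; auto. unfold Nf in Hn; nra. }
    assert (cv : continuity_2d_pt Xvf u v).
    { unfold Xvf, Nf, Nvf. unfold Rdiv. cont2; auto. unfold Nf in Hn; nra. }
    split; [|split; [|split]]; auto.
    + unfold Nf. eapply isd_eq. apply is_derive_div. apply isd_opp; exact b1.
      apply isd_plus; apply isd_mult; eauto. unfold Nf in Hn; lra.
      unfold Xvf, Nvf, Nf. cbv beta; field. unfold Nf in Hn; lra.
    + unfold Nf. eapply isd_eq. apply is_derive_div. apply isd_opp; exact b2.
      apply isd_plus; apply isd_mult; eauto. unfold Nf in Hn; lra.
      unfold Xuf, Nuf, Nf. cbv beta; field. unfold Nf in Hn; lra.
    + apply continuity_2d_pt_opp; auto.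
Qed.
End Inv.

Lemma sq_bound x K : x * x <= K -> Rabs x <= 1 + K.
Proof.
  intros H. destruct (Rle_dec (Rabs x) 1). pose proof (Rle_0_sqr x); unfold Rsqr in *; lra.
  assert (E : Rabs x * Rabs x = x * x) by (rewrite <- Rabs_mult; apply Rabs_pos_eq; apply Rle_0_sqr).
  nra.
Qed.

Lemma bounded_zero P Q Pu Pv K : C1cr P Q Pu Pv ->
  (forall u v, P u v * P u v + Q u v * Q u v <= K) -> forall u v, Pu u v = 0 /\ Pv u v = 0.
Proof.
  intros HC HK. apply (liouville_d P Q Pu Pv (1 + K) HC).
  intros u v. pose proof (HK u v). split; apply sq_bound; nra.
Qed.

Lemma core P Q Pu Pv m : C1cr P Q Pu Pv -> 0 < m ->
  (forall u v, m <= P u v * P u v + Q u v * Q u v) ->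
  forall u v, P u v * P u v + Q u v * Q u v = P 0 0 * P 0 0 + Q 0 0 * Q 0 0.
Proof.
  intros HC Hm HN.
  assert (HN' : forall u v, 0 < P u v * P u v + Q u v * Q u v) by (intros; specialize (HN u v); lra).
  assert (HI := inv_C1cr P Q Pu Pv HC HN').
  assert (Z := bounded_zero _ _ _ _ (/ m) HI).
  assert (Z' : forall u v, Xuf P Q Pu Pv u v = 0 /\ Xvf P Q Pu Pv u v = 0).
  { apply Z. intros u v. specialize (HN u v). unfold Nf.
    replace (P u v / (P u v * P u v + Q u v * Q u v) * (P u v / (P u v * P u v + Q u v * Q u v)) + - Q u v / (P u v * P u v + Q u v * Q u v) * (- Q u v / (P u v * P u v + Q u v * Q u v))) with (/ (P u v * P u v + Q u v * Q u v)) by (field; lra).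
    apply Rinv_le_contravar; lra. }
  destruct HI as [HI1 HI2].
  assert (E1 := const2d _ _ _ HI1 Z').
  assert (E2 : forall u v, - Q u v / Nf P Q u v = - Q 0 0 / Nf P Q 0 0).
  { apply (const2d _ _ _ HI2). intros u v. destruct (Z' u v) as [a b]. rewrite b. split; auto; ring. }
  intros u v.
  assert (K : forall u v, / Nf P Q u v = (P u v / Nf P Q u v) * (P u v / Nf P Q u v) + (- Q u v / Nf P Q u v) * (- Q u v / Nf P Q u v)).
  { intros a b. specialize (HN' a b). unfold Nf. field. lra. }
  assert (I : / Nf P Q u v = / Nf P Q 0 0).
  { rewrite !K. rewrite (E1 u v), (E2 u v). reflexivity. }
  specialize (HN' u v). assert (H00 := HN 0 0).
  unfold Nf in I. rewrite <- (Rinv_inv (P u v * P u v + Q u v * Q u v)), I, Rinv_inv. reflexivity.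
Qed.

Lemma du_ok f u v : has_partials f -> is_derive (fun s => f s v) u (du f u v).
Proof. intros H. apply Derive_correct. exact (proj1 (H u v)). Qed.
Lemma dv_ok f u v : has_partials f -> is_derive (fun s => f u s) v (dv f u v).
Proof. intros H. apply Derive_correct. exact (proj2 (H u v)). Qed.

Lemma schwarz_C2 f u v : C2 f -> du (dv f) u v = dv (du f) u v.
Proof.
  intros [H1 [H2 [H3 H4]]]. unfold du, dv. apply Schwarz.
  - exists (mkposreal 1 Rlt_0_1). intros a b _ _. split; [|split; [|split]].
    + exact (proj1 (H1 a b)). + exact (proj2 (H1 a b)). + exact (proj1 (H3 a b)). + exact (proj2 (H2 a b)).
  - destruct (H4 u v) as [c0 [c1 [c2 [c3 [c4 [c5 c6]]]]]]. exact c5.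
  - destruct (H4 u v) as [c0 [c1 [c2 [c3 [c4 [c5 c6]]]]]]. exact c4.
Qed.

Lemma harm_C1cr phi : harmonic phi ->
  C1cr (du phi) (fun u v => - dv phi u v) (du (du phi)) (dv (du phi)).
Proof.
  intros [HC HL]. assert (HC' := HC). destruct HC' as [H1 [H2 [H3 H4]]]. split; intros u v;
  destruct (H4 u v) as [c0 [c1 [c2 [c3 [c4 [c5 c6]]]]]].
  - split; [|split; [|split]].
    + apply du_ok; exact H2. + apply dv_ok; exact H2. + exact c3. + exact c4.
  - split; [|split; [|split]].
    + apply isd_opp. rewrite <- (schwarz_C2 phi u v HC). apply du_ok; exact H3.
    + eapply isd_eq. apply isd_opp. apply dv_ok; exact H3. specialize (HL u v). lra.
    + apply continuity_2d_pt_opp; exact c4.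
    + exact c3.
Qed.

Lemma sign_pos (J : R -> R -> R) l : (forall u v, continuity_2d_pt J u v) -> 0 < l ->
  (forall u v, l <= Rabs (J u v)) -> 0 <= J 0 0 -> forall u v, l <= J u v.
Proof.
  intros HJ Hl HA H0 u v.
  destruct (Rle_dec l (J u v)) as [|Hn]; [assumption|]. exfalso.
  assert (Hneg : J u v <= - l).
  { specialize (HA u v). destruct (Rle_dec 0 (J u v)).
    rewrite Rabs_pos_eq in HA; lra. rewrite Rabs_left in HA; lra. }
  assert (Hp : l <= J 0 0) by (specialize (HA 0 0); rewrite Rabs_pos_eq in HA; lra).
  set (g := fun t => J (t * u) (t * v)).
  assert (Hg : continuity g).
  { intros t. apply continuity_pt_filterlim.
    apply (c2_to1 (fun a b => J (b * u) (b * v)) 0 t).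
    apply (c2_comp J (fun a b => b * u) (fun a b => b * v)). apply HJ.
    apply continuity_2d_pt_mult. apply continuity_2d_pt_id2. apply continuity_2d_pt_const.
    apply continuity_2d_pt_mult. apply continuity_2d_pt_id2. apply continuity_2d_pt_const. }
  destruct (IVT_gen g 0 1 0 Hg) as [x [_ Hx]].
  { unfold g. rewrite !Rmult_0_l, !Rmult_1_l.
    rewrite Rmin_right, Rmax_left by lra. lra. }
  unfold g in Hx. specialize (HA (x * u) (x * v)). rewrite Hx, Rabs_R0 in HA. lra.
Qed.

Lemma sign (J : R -> R -> R) l : (forall u v, continuity_2d_pt J u v) -> 0 < l ->
  (forall u v, l <= Rabs (J u v)) -> (forall u v, l <= J u v) \/ (forall u v, l <= - J u v).
Proof.
  intros HJ Hl HA. destruct (Rle_dec 0 (J 0 0)).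
  - left. apply sign_pos; auto.
  - right. apply (sign_pos (fun u v => - J u v)); auto.
    + intros; apply continuity_2d_pt_opp; auto.
    + intros; rewrite Rabs_Ropp; auto.
    + lra.
Qed.

Lemma affine1 phi : has_partials phi ->
  (forall u v, du phi u v = du phi 0 0 /\ dv phi u v = dv phi 0 0) ->
  forall u v, phi u v = du phi 0 0 * u + dv phi 0 0 * v + phi 0 0.
Proof.
  intros HP HD u v.
  assert (E1 := const1d (fun x => phi x v - du phi 0 0 * x)).
  assert (E2 := const1d (fun y => phi 0 y - dv phi 0 0 * y)).
  cbv beta in E1, E2.
  rewrite Rmult_0_r, Rminus_0_r in E1, E2.
  assert (A1 : phi u v - du phi 0 0 * u = phi 0 v).
  { apply E1. intros x. eapply isd_eq. apply isd_minus. apply du_ok; auto.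
    apply isd_mult. apply isd_const. apply isd_id. destruct (HD x v) as [-> _]. cbv beta; ring. }
  assert (A2 : phi 0 v - dv phi 0 0 * v = phi 0 0).
  { apply E2. intros y. eapply isd_eq. apply isd_minus. apply dv_ok; auto.
    apply isd_mult. apply isd_const. apply isd_id. destruct (HD 0 y) as [_ ->]. cbv beta; ring. }
  lra.
Qed.

Lemma harm_const phi K : harmonic phi ->
  (forall u v, du phi u v * du phi u v + dv phi u v * dv phi u v <= K) ->
  forall u v, phi u v = du phi 0 0 * u + dv phi 0 0 * v + phi 0 0.
Proof.
  intros HH HK. assert (HC := harm_C1cr phi HH).
  assert (Z := bounded_zero _ _ _ _ K HC).
  assert (Z' : forall u v, du (du phi) u v = 0 /\ dv (du phi) u v = 0).
  { apply Z. intros u v. specialize (HK u v). replace (- dv phi u v * - dv phi u v) with (dv phi u v * dv phi u v) by ring. exact HK. }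
  destruct HC as [HC1 HC2].
  assert (E1 := const2d _ _ _ HC1 Z').
  assert (E2 : forall u v, - dv phi u v = - dv phi 0 0).
  { apply (const2d _ _ _ HC2). intros u v. destruct (Z' u v) as [a b]. rewrite a, b. split; ring. }
  apply affine1. apply HH. intros u v. split. apply E1. specialize (E2 u v). lra.
Qed.

Lemma final phi psi l s : harmonic phi -> harmonic psi -> 0 < l -> s * s = 1 ->
  (forall u v, l <= s * jac phi psi u v) -> affine_map phi psi.
Proof.
  intros Hp Hq Hl Hs HJ.
  assert (W := comb _ _ _ _ _ _ _ _ s (harm_C1cr psi Hq) (harm_C1cr phi Hp)).
  assert (ID : forall u v,
    (du psi u v + s * - dv phi u v) * (du psi u v + s * - dv phi u v) +
    (- dv psi u v - s * du phi u v) * (- dv psi u v - s * du phi u v) =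
    du psi u v * du psi u v + dv psi u v * dv psi u v +
    (s * s) * (du phi u v * du phi u v + dv phi u v * dv phi u v) + 2 * (s * jac phi psi u v)).
  { intros; unfold jac; ring. }
  assert (L : forall u v, 2 * l <= (du psi u v + s * - dv phi u v) * (du psi u v + s * - dv phi u v) +
    (- dv psi u v - s * du phi u v) * (- dv psi u v - s * du phi u v)).
  { intros u v. rewrite ID, Hs. specialize (HJ u v).
    pose proof (Rle_0_sqr (du psi u v)); pose proof (Rle_0_sqr (dv psi u v));
    pose proof (Rle_0_sqr (du phi u v)); pose proof (Rle_0_sqr (dv phi u v)); unfold Rsqr in *. lra. }
  assert (C := core _ _ _ _ (2 * l) W ltac:(lra) L). cbv beta in C.
  set (N0 := (du psi 0 0 + s * - dv phi 0 0) * (du psi 0 0 + s * - dv phi 0 0) +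
    (- dv psi 0 0 - s * du phi 0 0) * (- dv psi 0 0 - s * du phi 0 0)) in C.
  assert (C' : forall u v, du psi u v * du psi u v + dv psi u v * dv psi u v +
    (du phi u v * du phi u v + dv phi u v * dv phi u v) + 2 * (s * jac phi psi u v) = N0).
  { intros u v. rewrite <- (C u v), ID, Hs. ring. }
  assert (E1 := harm_const phi N0 Hp).
  assert (E2 := harm_const psi N0 Hq).
  exists (du phi 0 0), (dv phi 0 0), (phi 0 0), (du psi 0 0), (dv psi 0 0), (psi 0 0).
  intros u v. split.
  - apply E1. intros a b. rewrite <- (C' a b). specialize (HJ a b).
    pose proof (Rle_0_sqr (du psi a b)); pose proof (Rle_0_sqr (dv psi a b)); unfold Rsqr in *. lra.
  - apply E2. intros a b. rewrite <- (C' a b). specialize (HJ a b).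
    pose proof (Rle_0_sqr (du phi a b)); pose proof (Rle_0_sqr (dv phi a b)); unfold Rsqr in *. lra.
Qed.

Theorem lemma3p2 (phi psi : R -> R -> R) :
  harmonic phi -> harmonic psi -> ~ affine_map phi psi ->
  is_glb_Rbar (fun y => exists u v, y = Rabs (jac phi psi u v)) (Finite 0).
Proof.
  intros Hp Hq Hna. split.
  - intros x [u [v ->]]. simpl. apply Rabs_pos.
  - intros b Hb. destruct b as [l| |]; simpl; auto.
    + destruct (Rle_dec l 0) as [|Hl]; auto. exfalso. apply Hna.
      assert (Hl' : 0 < l) by lra.
      assert (HA : forall u v, l <= Rabs (jac phi psi u v)).
      { intros u v. specialize (Hb (Rabs (jac phi psi u v)) (ex_intro _ u (ex_intro _ v eq_refl))).
        exact Hb. }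
      assert (HC : forall u v, continuity_2d_pt (jac phi psi) u v).
      { intros u v. destruct Hp as [[_ [_ [_ Hp4]]] _]. destruct Hq as [[_ [_ [_ Hq4]]] _].
        destruct (Hp4 u v) as [a0 [a1 [a2 _]]]. destruct (Hq4 u v) as [b0 [b1 [b2 _]]].
        unfold jac. apply continuity_2d_pt_minus; apply continuity_2d_pt_mult; assumption. }
      destruct (sign _ l HC Hl' HA) as [S|S].
      * apply (final phi psi l 1); auto. ring. intros; rewrite Rmult_1_l; auto.
      * apply (final phi psi l (-1)); auto. ring. intros; specialize (S u v); lra.
    + specialize (Hb (Rabs (jac phi psi 0 0)) (ex_intro _ 0 (ex_intro _ 0 eq_refl))). exact Hb.
Qed.
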